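(* Let $A\in\mathbb{R}^{n\times n}$, let $W\in\mathbb{R}^{n\times n}$ be symmetric positive definite, let $C=\mathrm{diag}(C_{11},\dots,C_{nn})$ be diagonal positive definite and $V=\mathrm{diag}(\sigma_1^2,\dots,\sigma_n^2)$ with $\sigma_i>0$. Let $\Sigma\succ0$ be the solution of the discrete algebraic Riccati equation $\Sigma=A\Sigma A^T-A\Sigma C^T(C\Sigma C^T+V)^{-1}C\Sigma A^T+W$. Then $$\ln\det\Sigma\ge\ln\left[\frac{(\det A)^2}{\frac1n\left(\mathrm{tr}\,W^{-1}+\sum_{i=1}^n\frac{C_{ii}^2}{\sigma_i^2}\right)^n}+\det W\right].$$ *)

(* Defs.v *)
From mathcomp Require Import all_boot all_order all_algebra.
From mathcomp Require Import all_classical all_reals all_analysis.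
Set Implicit Arguments. Unset Strict Implicit. Unset Printing Implicit Defensive.
Import Order.TTheory GRing.Theory Num.Theory.
Local Open Scope ring_scope.

Definition posdef (R : realType) (n : nat) (M : 'M[R]_n) : Prop :=
  M^T = M /\ forall x : 'cV[R]_n, x != 0 -> 0 < (x^T *m M *m x) 0 0.

(* Main.v *)
Require Import Defs.
From mathcomp Require Import all_boot all_order all_algebra.
From mathcomp Require Import all_classical all_reals all_analysis.
Import Order.TTheory GRing.Theory Num.Theory.
From mathcomp Require Import complex spectral sesquilinear.
From mathcomp Require Import ring lra.
Set Implicit Arguments. Unset Strict Implicit. Unset Printing Implicit Defensive.
Local Open Scope ring_scope.


Section C1s.
Local Open Scope sesquilinear_scope.


Section Cx.
Variable C : numClosedFieldType.

Definition cqf n (H : 'M[C]_n) (v : 'rV[C]_n) := (v *m H *m v ^t*) 0 0.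
Definition cpsd n (H : 'M[C]_n) := H ^t* = H /\ forall v, 0 <= cqf H v.
Definition cpd n (H : 'M[C]_n) := H ^t* = H /\ forall v, v != 0 -> 0 < cqf H v.

Lemma tCM m n p (A : 'M[C]_(m, n)) (B : 'M[C]_(n, p)) : (A *m B)^t* = B^t* *m A^t*.
Proof. by rewrite trmx_mul map_mxM. Qed.

Lemma tC1 n : (1%:M : 'M[C]_n)^t* = 1%:M.
Proof. by rewrite trmx1 map_mx1. Qed.

Section Spec.
Variables (n : nat) (H : 'M[C]_n).
Hypothesis hH : H ^t* = H.
Let P := spectralmx H.
Let d := spectral_diag H.

Lemma spec_eq : H = P ^t* *m diag_mx d *m P.
Proof.
have hn : H \is normalmx.
  by apply: hermitian_normalmx; rewrite qualifE /= expr0 scale1r hH.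
by rewrite -invmx_unitary ?spectral_unitarymx //; apply/orthomx_spectralP.
Qed.

Lemma spec_PPt : P *m P ^t* = 1%:M.
Proof. exact/unitarymxP/spectral_unitarymx. Qed.

Lemma spec_PtP : P ^t* *m P = 1%:M.
Proof. by rewrite -invmx_unitary ?spectral_unitarymx // mulVmx ?spectral_unit. Qed.

Lemma spec_qf i : cqf H (row i P) = d 0 i.
Proof.
rewrite /cqf {1}spec_eq !mulmxA -row_mul spec_PPt row1 -rowE row_diag_mx.
rewrite -!scalemxAl -rowE rowE tCM mulmxA -rowE -row_mul spec_PPt row1.
rewrite trmx_delta map_delta_mx ?rmorph0 ?rmorph1 // mul_delta_mx.
by rewrite !mxE !eqxx mulr1.
Qed.

Lemma spec_det : \det H = \prod_i d 0 i.
Proof.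
rewrite {1}spec_eq !det_mulmx mulrC mulrA -det_mulmx spec_PPt det1 mul1r.
exact: det_diag.
Qed.

Lemma spec_tr : \tr H = \sum_i d 0 i.
Proof.
by rewrite {1}spec_eq mxtrace_mulC mulmxA spec_PPt mul1mx mxtrace_diag.
Qed.

Lemma spec_row_neq0 i : row i P != 0.
Proof.
apply/eqP => h0; have := spec_PPt; move/(congr1 (row i)).
rewrite row_mul h0 mul0mx row1 => /matrixP /(_ 0 i).
by rewrite !mxE !eqxx /= => /eqP; rewrite eq_sym oner_eq0.
Qed.
End Spec.


Lemma cpsd_eig n (H : 'M[C]_n) (hH : cpsd H) i : 0 <= spectral_diag H 0 i.
Proof. by case: hH => h1 h2; rewrite -spec_qf. Qed.

Lemma cpd_eig n (H : 'M[C]_n) (hH : cpd H) i : 0 < spectral_diag H 0 i.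
Proof. by case: hH => h1 h2; rewrite -spec_qf // h2 // spec_row_neq0. Qed.

Lemma cpd_psd n (H : 'M[C]_n) : cpd H -> cpsd H.
Proof.
case=> h1 h2; split => // v; have [->|/h2 /ltW //] := eqVneq v 0.
by rewrite /cqf !mul0mx mxE.
Qed.

Lemma cdet_pos n (H : 'M[C]_n) : cpd H -> 0 < \det H.
Proof.
move=> hH; rewrite spec_det; last by case: hH.
by apply: prodr_gt0 => i _; apply: cpd_eig.
Qed.

Lemma cdet_ge0 n (H : 'M[C]_n) : cpsd H -> 0 <= \det H.
Proof.
move=> hH; rewrite spec_det; last by case: hH.
by apply: prodr_ge0 => i _; apply: cpsd_eig.
Qed.

Lemma cAGM n (H : 'M[C]_n) : cpsd H -> \det H <= (n%:R^-1 * \tr H) ^+ n.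
Proof.
move=> hH; rewrite spec_det ?spec_tr; try by case: hH.
have := leif_AGM (A := predT) (E := fun i : 'I_n => spectral_diag H 0 i).
rewrite card_ord => /(_ (fun i _ => cpsd_eig hH i)) [h _].
by rewrite mulrC.
Qed.


Lemma prod1_le n (f : 'I_n.+1 -> C) : (forall i, 0 <= f i) ->
  1 + \prod_i f i <= \prod_i (f i + 1).
Proof.
move=> hf; rewrite !big_ord_recl.
set a := \prod_(i < n) _; set b := \prod_(i < n) _.
have [ha [hab hb]] : 0 <= a /\ a <= b /\ 1 <= b.
  apply: (big_ind2 (fun x y => 0 <= x /\ x <= y /\ 1 <= y)).
  - by rewrite ler01 lexx.
  - move=> x1 x2 y1 y2 [h1 [h2 h3]] [h4 [h5 h6]]; split; first exact: mulr_ge0.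
    split; first by apply: ler_pM.
    by rewrite -[1]mulr1; apply: ler_pM.
  - move=> i _; split=> //; split; first by rewrite lerDl.
    by rewrite lerDr.
rewrite mulrDl mul1r addrC; apply: lerD => //.
by apply: ler_wpM2l.
Qed.

Lemma det_Z1 n (Z : 'M[C]_n.+1) : cpsd Z -> 1 + \det Z <= \det (Z + 1%:M).
Proof.
move=> hZ; have hZh := hZ.1.
have -> : Z + 1%:M = (spectralmx Z)^t* *m
   diag_mx (\row_i (spectral_diag Z 0 i + 1)) *m spectralmx Z.
  have -> : diag_mx (\row_i (spectral_diag Z 0 i + 1)) =
      diag_mx (spectral_diag Z) + 1%:M.
    by apply/matrixP => i j; rewrite !mxE -mulrnDl.
  by rewrite mulmxDr mulmxDl mulmx1 spec_PtP // -spec_eq.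
rewrite !det_mulmx mulrC mulrA -det_mulmx spec_PPt // det1 mul1r det_diag.
rewrite spec_det //.
under [X in _ <= X]eq_bigr do rewrite mxE.
by apply: prod1_le => i; apply: cpsd_eig.
Qed.

Lemma cMink n (X Y : 'M[C]_n.+1) : cpsd X -> cpd Y ->
  \det X + \det Y <= \det (X + Y).
Proof.
move=> hX hY.
have hYh := hY.1.
set P := spectralmx Y; set e := spectral_diag Y.
have hYe : Y = P^t* *m diag_mx e *m P := spec_eq hYh.
set s := \row_i sqrtC (e 0 i).
have hs : forall i, 0 < s 0 i by move=> i; rewrite mxE sqrtC_gt0 cpd_eig.
set L := P^t* *m diag_mx s.
have hsC : (diag_mx s)^t* = diag_mx s.
  rewrite tr_diag_mx map_diag_mx; congr diag_mx; apply/rowP => i.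
  by rewrite !mxE; apply: geC0_conj; rewrite sqrtC_ge0 ltW // cpd_eig.
have hLt : L^t* = diag_mx s *m P by rewrite tCM hsC trmxCK.
have hLL : L *m L^t* = Y.
  rewrite hLt /L mulmxA -[_ *m diag_mx s *m diag_mx s]mulmxA mulmx_diag hYe.
  congr (_ *m diag_mx _ *m _); apply/rowP => i; rewrite !mxE -expr2 sqrtCK //.
have hLu : L \in unitmx.
  rewrite unitmx_mul; apply/andP; split.
    by have /mulmx1_unit[] := @spec_PtP n.+1 Y.
  rewrite unitmxE det_diag unitfE; apply/lt0r_neq0/prodr_gt0 => i _; exact: hs.
set M := invmx L.
set Z := M *m X *m M^t*.
have hZ : cpsd Z.
  split; first by rewrite /Z !tCM trmxCK hX.1 mulmxA.
  move=> v; rewrite /cqf /Z !mulmxA -[_ *m M^t* *m v^t*]mulmxA -tCM.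
  exact: hX.2.
have hLM : L *m M = 1%:M by rewrite mulmxV.
have hML : M^t* *m L^t* = 1%:M by rewrite -tCM hLM tC1.
have hXZ : X = L *m Z *m L^t*.
  by rewrite /Z !mulmxA hLM mul1mx -mulmxA hML mulmx1.
have hXY : X + Y = L *m (Z + 1%:M) *m L^t*.
  by rewrite mulmxDr mulmxDl mulmx1 hLL -hXZ.
have hg : 0 < \det L * \det (L^t*) by rewrite -det_mulmx hLL cdet_pos.
have e3 : forall A : 'M[C]_n.+1, \det (L *m A *m L^t*) = \det L * \det (L^t*) * \det A.
  by move=> A; rewrite !det_mulmx mulrAC.
have e4 : \det (L *m L^t*) = \det L * \det (L^t*) * 1 by rewrite det_mulmx mulr1.
rewrite hXY {1}hXZ -hLL e4 !e3.
rewrite -mulrDr addrC.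
by rewrite ler_pM2l // det_Z1.
Qed.

End Cx.

End C1s.

Section C2s.
Local Open Scope sesquilinear_scope.


Section Rx.
Variable R : rcfType.
Local Notation rc := (real_complex R).
Local Notation Rp := (@complex.Re R).
Local Notation Ip := (@complex.Im R).
Local Open Scope complex_scope.

Definition psdR n (M : 'M[R]_n) := M^T = M /\ forall x : 'cV_n, 0 <= (x^T *m M *m x) 0 0.
Definition pdR n (M : 'M[R]_n) := M^T = M /\ forall x : 'cV_n, x != 0 -> 0 < (x^T *m M *m x) 0 0.

Lemma ReIm_term (x y : R[i]) (r : R) :
  x * r%:C * Num.conj y =
  (r * (Rp x * Rp y + Ip x * Ip y)) +i* (r * (Ip x * Rp y - Rp x * Ip y)).
Proof.
case: x => a b; case: y => c d /=. apply/eqP; rewrite eq_complex /=; apply/andP; split; apply/eqP; ring.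
Qed.


Lemma sum_complex (I : finType) (f g : I -> R) :
  \sum_i (f i +i* g i) = (\sum_i f i) +i* (\sum_i g i).
Proof.
elim/big_rec3: _ => [//|i x y z _ ->].
by [].
Qed.

Lemma qf_map n (M : 'M[R]_n) (hM : M^T = M) (v : 'rV[R[i]]_n) :
  cqf (map_mx rc M) v =
  (((map_mx Rp v) *m M *m (map_mx Rp v)^T) 0 0 + ((map_mx Ip v) *m M *m (map_mx Ip v)^T) 0 0)%:C.
Proof.
have hMs : forall j k, M k j = M j k.
  by move=> j k; rewrite -[in LHS]hM mxE.
rewrite /cqf !mxE.
under eq_bigr do rewrite !mxE mulr_suml.
under eq_bigr do under eq_bigr do rewrite !mxE ReIm_term.
under eq_bigr do rewrite sum_complex.
rewrite sum_complex.
rewrite -big_split /=.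
congr Complex.
  apply: eq_bigr => k _; rewrite !mxE !mulr_suml -big_split.
  by apply: eq_bigr => j _; rewrite !mxE /=; ring.
under eq_bigr do (under eq_bigr do rewrite mulrBr; rewrite sumrB).
rewrite sumrB; apply/eqP; rewrite subr_eq0; apply/eqP.
rewrite exchange_big; apply: eq_bigr => k _; apply: eq_bigr => j _.
by rewrite hMs; ring.
Qed.

Lemma herm_map n (M : 'M[R]_n) : M^T = M -> (map_mx rc M)^t* = map_mx rc M.
Proof.
move=> hM; rewrite map_trmx hM; apply/matrixP => i j; rewrite !mxE.
exact: conjc_real.
Qed.

Lemma psd_map n (M : 'M[R]_n) : psdR M -> cpsd (map_mx rc M).
Proof.
case=> hM h; split; first exact: herm_map.
have hq : forall w : 'rV[R]_n, 0 <= (w *m M *m w^T) 0 0.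
  by move=> w; have := h w^T; rewrite trmxK.
by move=> v; rewrite qf_map // ler0c; apply: addr_ge0.
Qed.

Lemma pd_map n (M : 'M[R]_n) : pdR M -> cpd (map_mx rc M).
Proof.
case=> hM h; split; first exact: herm_map.
have h0 : forall x : 'cV[R]_n, 0 <= (x^T *m M *m x) 0 0.
  move=> x; have [->|/h /ltW //] := eqVneq x 0.
  by rewrite !mulmx0 mxE.
have hq : forall w : 'rV[R]_n, 0 <= (w *m M *m w^T) 0 0.
  by move=> w; have := h0 w^T; rewrite trmxK.
have hq' : forall w : 'rV[R]_n, w != 0 -> 0 < (w *m M *m w^T) 0 0.
  move=> w wn0; have := h w^T; rewrite trmxK; apply.
  by apply: contra wn0 => /eqP /(congr1 trmx); rewrite trmxK trmx0 => ->.
move=> v vn0; rewrite qf_map //.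
have -> : (0 : R[i]) = 0%:C by [].
rewrite ltcR.
have [ha|ha] := eqVneq (map_mx Rp v) 0; last first.
  by rewrite -[0]addr0; apply: ltr_leD; [apply: hq' | apply: hq].
have [hb|hb] := eqVneq (map_mx Ip v) 0; last first.
  by rewrite -[0]addr0; apply: ler_ltD; [apply: hq | apply: hq'].
exfalso; move/eqP: vn0; apply; apply/matrixP => i j.
move: ha hb => /matrixP /(_ i j) ha /matrixP /(_ i j) hb; move: ha hb; rewrite !mxE.
by case: (v i j) => a b /= -> ->.
Qed.

Lemma tr_map n (A : 'M[R]_n) : \tr (map_mx rc A) = (\tr A)%:C.
Proof.
rewrite /mxtrace (rmorph_sum rc); apply: eq_bigr => i _; by rewrite mxE.
Qed.

Lemma detR_pos n (M : 'M[R]_n) : pdR M -> 0 < \det M.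
Proof.
move=> /pd_map /cdet_pos; rewrite det_map_mx.
have -> : (0 : R[i]) = 0%:C by [].
by rewrite ltcR.
Qed.

Lemma psdR_det_ge0 n (M : 'M[R]_n) : psdR M -> 0 <= \det M.
Proof.
move=> /psd_map /cdet_ge0; rewrite det_map_mx.
by rewrite ler0c.
Qed.

Lemma minkR n (X Y : 'M[R]_n) : (0 < n)%N -> psdR X -> pdR Y ->
  \det X + \det Y <= \det (X + Y).
Proof.
case: n X Y => // n X Y _ /psd_map hX /pd_map hY.
have := cMink hX hY; rewrite -map_mxD !det_map_mx -rmorphD.
by rewrite lecR.
Qed.

Lemma agmR n (N : 'M[R]_n) : psdR N -> \det N <= (n%:R^-1 * \tr N) ^+ n.
Proof.
move=> /psd_map /cAGM; rewrite det_map_mx tr_map.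
have -> : (n%:R^-1 : R[i]) = (n%:R^-1)%:C by rewrite fmorphV rmorph_nat.
by rewrite -rmorphM -rmorphXn lecR.
Qed.

End Rx.
End C2s.

Section Rr.
Variable R : rcfType.
Variable n : nat.
Implicit Types (M W X Y : 'M[R]_n) (x y : 'cV[R]_n).

Definition Bf M x y := (x^T *m M *m y) 0 0.

Lemma Bf0r M x : Bf M x 0 = 0.
Proof. by rewrite /Bf mulmx0 mxE. Qed.

Lemma BfBl M x y z t : Bf M (x - t *: y) z = Bf M x z - t * Bf M y z.
Proof.
by rewrite /Bf linearB linearZ /= !mulmxBl -!scalemxAl !mxE.
Qed.

Lemma BfBr M x y z t : Bf M z (x - t *: y) = Bf M z x - t * Bf M z y.
Proof.
by rewrite /Bf mulmxBr -scalemxAr !mxE.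
Qed.

Lemma Bf_sym M x y : M^T = M -> Bf M y x = Bf M x y.
Proof.
move=> hM; have e : forall A : 'M[R]_1, A 0 0 = A^T 0 0 by move=> A; rewrite mxE.
by rewrite /Bf [RHS]e !trmx_mul trmxK hM mulmxA.
Qed.

Lemma pd_psd M : pdR M -> psdR M.
Proof.
case=> h1 h2; split => // x; have [->|/h2/ltW //] := eqVneq x 0.
by rewrite mulmx0 mxE.
Qed.

Lemma cs M x y : pdR M -> Bf M x y ^+ 2 <= Bf M x x * Bf M y y.
Proof.
move=> hM; have [->|yn0] := eqVneq y 0.
  by rewrite !Bf0r mulr0 expr0n.
have hb : 0 < Bf M y y by apply: hM.2.
set b := Bf M y y in hb *; set u := Bf M x y.
set t := u / b.
have := (pd_psd hM).2 (x - t *: y).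
rewrite -/(Bf M _ _) BfBl !BfBr (Bf_sym x y hM.1) -/u -/b.
have htb : t * b = u by rewrite /t divfK // gt_eqF.
rewrite htb subrr mulr0 subr0 subr_ge0.
by rewrite /t mulrAC -expr2 ler_pdivrMr.
Qed.

Lemma mxaddE p q (A B : 'M[R]_(p, q)) i j : (A + B) i j = A i j + B i j.
Proof. by rewrite mxE. Qed.

Lemma qfD M1 M2 x : (x^T *m (M1 + M2) *m x) 0 0 =
  (x^T *m M1 *m x) 0 0 + (x^T *m M2 *m x) 0 0.
Proof. by rewrite mulmxDr mulmxDl mxaddE. Qed.

Lemma psd_add X Y : psdR X -> psdR Y -> psdR (X + Y).
Proof.
move=> [h1 h2] [h3 h4]; split; first by rewrite linearD /= h1 h3.
by move=> x; rewrite qfD addr_ge0.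
Qed.

Lemma psd_pd_add X Y : psdR X -> pdR Y -> pdR (X + Y).
Proof.
move=> [h1 h2] [h3 h4]; split; first by rewrite linearD /= h1 h3.
by move=> x xn0; rewrite qfD -[0]addr0; apply: ler_ltD => //; apply: h4.
Qed.

Lemma psd_cong M (B : 'M[R]_n) : psdR M -> psdR (B *m M *m B^T).
Proof.
move=> [h1 h2]; split; first by rewrite !trmx_mul trmxK h1 mulmxA.
by move=> x; have := h2 (B^T *m x); rewrite trmx_mul trmxK !mulmxA.
Qed.

Lemma pd_unit M : pdR M -> M \in unitmx.
Proof. by move=> /detR_pos h; rewrite unitmxE unitfE lt0r_neq0. Qed.

Lemma pd_inv M : pdR M -> pdR (invmx M).
Proof.
move=> hM; have hu := pd_unit hM; case: hM => h1 h2.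
split; first by rewrite trmx_inv h1.
move=> x xn0; set y := invmx M *m x.
have hx : x = M *m y by rewrite /y mulKVmx.
have yn0 : y != 0 by apply: contra xn0 => /eqP; rewrite hx => ->; rewrite mulmx0.
rewrite hx trmx_mul h1 -!mulmxA (mulmxA (invmx M)) mulVmx // mul1mx mulmxA.
exact: h2.
Qed.

Lemma diag_qf (d : 'rV[R]_n) x :
  (x^T *m diag_mx d *m x) 0 0 = \sum_i d 0 i * x i 0 ^+ 2.
Proof.
rewrite mul_mx_diag mxE; apply: eq_bigr => i _; rewrite !mxE; ring.
Qed.

Lemma diag_pd (d : 'rV[R]_n) : (forall i, 0 < d 0 i) -> pdR (diag_mx d).
Proof.
move=> hd; split; first exact: tr_diag_mx.
move=> x xn0; rewrite diag_qf.
have : ~~ [forall k, x k 0 == 0].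
  apply: contra xn0 => /forallP h; apply/eqP/matrixP => i j.
  by rewrite ord1 mxE; apply/eqP/h.
rewrite negb_forall => /existsP [k hk].
rewrite (bigD1 k) //=; apply: (@lt_le_trans _ _ (d 0 k * x k 0 ^+ 2)).
  by apply: mulr_gt0 => //; rewrite exprn_even_gt0.
rewrite lerDl.
by apply: sumr_ge0 => i _; apply: mulr_ge0; [apply: ltW | apply: sqr_ge0].
Qed.

Lemma diag_psd (d : 'rV[R]_n) : (forall i, 0 <= d 0 i) -> psdR (diag_mx d).
Proof.
move=> hd; split; first exact: tr_diag_mx.
move=> x; rewrite diag_qf.
by apply: sumr_ge0 => i _; apply: mulr_ge0 => //; apply: sqr_ge0.
Qed.

Lemma qf_inv_le W X y : pdR W -> psdR X ->
  (y^T *m invmx (X + W) *m y) 0 0 <= (y^T *m invmx W *m y) 0 0.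
Proof.
move=> hW hX.
have hS := psd_pd_add hX hW.
have hSu := pd_unit hS; have hWu := pd_unit hW.
set S := X + W in hS hSu *.
set u := invmx S *m y; set w := invmx W *m y.
have hSi : (invmx S)^T = invmx S by rewrite trmx_inv hS.1.
have hWi : (invmx W)^T = invmx W by rewrite trmx_inv hW.1.
have hyS : y = S *m u by rewrite /u mulKVmx.
have hyW : y = W *m w by rewrite /w mulKVmx.
have eq1 : (y^T *m invmx S *m y) = u^T *m S *m u.
  by rewrite {1}hyS /u trmx_mul hS.1 -!mulmxA (mulmxA S) mulmxV // mul1mx mulmxA -hyS.
have eq2 : (y^T *m invmx S *m y) 0 0 = Bf W u w.
  by rewrite /Bf -[u^T *m W *m w]mulmxA -hyW /u trmx_mul hSi.
have eq3 : (y^T *m invmx W *m y) = w^T *m W *m w.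
  by rewrite {1}hyW /w trmx_mul hW.1 -!mulmxA (mulmxA W) mulmxV // mul1mx mulmxA -hyW.
set q := (y^T *m invmx S *m y) 0 0.
set r := (y^T *m invmx W *m y) 0 0.
have hr : 0 <= r by rewrite /r eq3; apply: (pd_psd hW).2.
have huu : Bf W u u <= q.
  rewrite /q eq1 /S qfD /Bf lerDr; exact: hX.2.
have hcs := cs u w hW.
have hww : Bf W w w = r by rewrite /r eq3.
rewrite -eq2 -/q hww in hcs.
have [hq|hq] := lerP q 0; first exact: le_trans hq hr.
have : q * q <= q * r.
  rewrite -expr2; apply: le_trans hcs _; apply: ler_wpM2r => //.
by rewrite ler_pM2l.
Qed.

Lemma diag_entry (M : 'M[R]_n) i : M i i = ((delta_mx i 0 : 'cV[R]_n)^T *m M *m (delta_mx i 0 : 'cV[R]_n)) 0 0.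
Proof. by rewrite trmx_delta -rowE -colE !mxE. Qed.

Lemma tr_inv_le W X : pdR W -> psdR X -> \tr (invmx (X + W)) <= \tr (invmx W).
Proof.
move=> hW hX; rewrite /mxtrace; apply: ler_sum => i _.
by rewrite !diag_entry; apply: qf_inv_le.
Qed.

End Rr.


Lemma woodbury (R : comRingType) n (S Si Cm T Ti V Vi : 'M[R]_n) :
  S *m Si = 1%:M -> Ti *m T = 1%:M -> V *m Vi = 1%:M ->
  T = Cm *m S *m Cm^T + V ->
  (S - S *m Cm^T *m Ti *m Cm *m S) *m (Si + Cm^T *m Vi *m Cm) = 1%:M.
Proof.
move=> hS hT hV eT.
set P := S *m Cm^T.
have e1 : Cm *m S *m Cm^T = T - V by rewrite eT addrK.
have t2 : S *m (Cm^T *m Vi *m Cm) = P *m Vi *m Cm by rewrite !mulmxA.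
have t3 : P *m Ti *m Cm *m S *m Si = P *m Ti *m Cm by rewrite -mulmxA hS mulmx1.
have t4 : P *m Ti *m Cm *m S *m (Cm^T *m Vi *m Cm) = P *m Vi *m Cm - P *m Ti *m Cm.
  have -> : P *m Ti *m Cm *m S *m (Cm^T *m Vi *m Cm) =
      P *m (Ti *m (Cm *m S *m Cm^T)) *m Vi *m Cm by rewrite !mulmxA.
  rewrite e1 mulmxBr hT mulmxBr mulmx1 !mulmxBl; congr (_ - _).
  by rewrite !mulmxA -[P *m Ti *m V *m Vi]mulmxA hV mulmx1.
rewrite mulmxDr !mulmxBl hS t2 -/P t3 t4.
by rewrite opprB [_ + (_ - _)]addrC !subrK.
Qed.


Theorem theorem5 (R : realType) (n : nat) (hn : (0 < n)%N)
  (A W Sigma : 'M[R]_n) (c sigma : 'rV[R]_n)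
  (hW : posdef W)
  (hc : forall i, 0 < c 0 i)
  (hsigma : forall i, 0 < sigma 0 i)
  (hSigma : posdef Sigma)
  (hDARE : let C := diag_mx c in
           let V := diag_mx (\row_i (sigma 0 i ^+ 2)) in
           Sigma = A *m Sigma *m A^T
                   - A *m Sigma *m C^T *m invmx (C *m Sigma *m C^T + V)
                       *m C *m Sigma *m A^T
                   + W) :
  ln (\det Sigma) >=
  ln ((\det A) ^+ 2 /
        ((n%:R)^-1 * (\tr (invmx W)
                      + \sum_(i < n) (c 0 i) ^+ 2 / (sigma 0 i) ^+ 2)) ^+ n
      + \det W).
Proof.
move: hDARE; cbv zeta.
set C := diag_mx c.
set V := diag_mx (\row_i (sigma 0 i ^+ 2)).
set T := C *m Sigma *m C^T + V.
move=> hD.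
have hWp : pdR W := hW.
have hSp : pdR Sigma := hSigma.
have hVp : pdR V by apply: diag_pd => i; rewrite mxE exprn_gt0.
have hTp : pdR T by apply: psd_pd_add => //; apply: psd_cong; apply: pd_psd.
set Vi := diag_mx (\row_i (sigma 0 i ^+ 2)^-1).
have hVVi : V *m Vi = 1%:M.
  rewrite mulmx_diag -diag_const_mx; congr diag_mx; apply/rowP => i.
  by rewrite !mxE mulfV // expf_neq0 // gt_eqF.
set K := Sigma - Sigma *m C^T *m invmx T *m C *m Sigma.
have hSK : Sigma = A *m K *m A^T + W.
  rewrite {1}hD; congr (_ + _).
  by rewrite /K mulmxBr mulmxBl !mulmxA.
set Si := invmx Sigma.
set D := C^T *m Vi *m C.
set N := Si + D.
have hKN : K *m N = 1%:M.
  apply: (@woodbury _ _ _ _ _ T _ V).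
  - by rewrite mulmxV // pd_unit.
  - by rewrite mulVmx // pd_unit.
  - exact: hVVi.
  - by [].
have hSip : pdR Si := pd_inv hSp.
have hDp : psdR D.
  have -> : D = C^T *m Vi *m (C^T)^T by rewrite trmxK.
  apply: psd_cong; apply: diag_psd => i.
  by rewrite mxE invr_ge0 exprn_ge0 // ltW.
have hNp : pdR N by rewrite /N addrC; apply: psd_pd_add.
have hNu := pd_unit hNp.
have hKi : K = invmx N by rewrite -[K]mulmx1 -(mulmxV hNu) mulmxA hKN mul1mx.
have hKp : pdR K by rewrite hKi; apply: pd_inv.
set X := A *m K *m A^T.
have hXp : psdR X := psd_cong A (pd_psd hKp).
have hmink := minkR hn hXp hWp; rewrite -hSK in hmink.
have hdetX : \det X = \det A ^+ 2 / \det N.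
  by rewrite /X !det_mulmx det_tr hKi det_inv expr2 mulrAC.
have hdetN : 0 < \det N := detR_pos hNp.
have htrD : \tr D = \sum_i c 0 i ^+ 2 / sigma 0 i ^+ 2.
  rewrite /D /C tr_diag_mx !mulmx_diag mxtrace_diag; apply: eq_bigr => i _.
  by rewrite !mxE; ring.
have htrN : \tr N <= \tr (invmx W) + \sum_i c 0 i ^+ 2 / sigma 0 i ^+ 2.
  by rewrite /N mxtraceD htrD lerD2r /Si hSK; apply: tr_inv_le.
have htrN0 : 0 <= \tr N.
  rewrite /mxtrace; apply: sumr_ge0 => i _; rewrite diag_entry.
  exact: (pd_psd hNp).2.
set Q := (n%:R^-1 * (\tr (invmx W) + \sum_i c 0 i ^+ 2 / sigma 0 i ^+ 2)) ^+ n.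
have hNQ : \det N <= Q.
  apply: le_trans (agmR (pd_psd hNp)) _; apply: lerXn2r.
  - by rewrite nnegrE mulr_ge0 // invr_ge0 ler0n.
  - by rewrite nnegrE mulr_ge0 // ?invr_ge0 ?ler0n // (le_trans htrN0 htrN).
  - by apply: ler_wpM2l => //; rewrite invr_ge0 ler0n.
have hQ : 0 < Q := lt_le_trans hdetN hNQ.
have hdW : 0 < \det W := detR_pos hWp.
rewrite ler_ln ?posrE; last first.
  exact: detR_pos hSp.
  apply: (lt_le_trans hdW); rewrite lerDr; apply: divr_ge0; [apply: sqr_ge0 | apply: ltW hQ].
apply: le_trans _ hmink; rewrite lerD2r hdetX.
apply: ler_wpM2l; first exact: sqr_ge0.
by rewrite lef_pV2 ?posrE.
Qed.
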